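(* Under the hypotheses and notation of the setting below, a vector $x=x_1\varepsilon_1+x_2\varepsilon_2$ with $x_1,x_2\neq0$ is $q$-minimal and $g$-anisotropic (i.e. $q(x)\in\mathcal T$) iff $\beta,x_1,x_2\in\mathcal T$ and $\alpha_1x_1^2<_\nu\beta x_1x_2$ and $\alpha_2x_2^2<_\nu\beta x_1x_2$.
   Context: All semirings are commutative with $1$. A semiring $R$ is supertropical if $e:=1+1$ satisfies $e+e=e$ and, for all $x,y\in R$: if $ex\neq ey$ then $x+y\in\{x,y\}$, and if $ex=ey$ then $x+y=ey$. $eR$ is totally ordered by $u\le v\iff u+v=v$; write $x<_\nu y$ for $ex<ey$. $\mathcal T=R\setminus eR$, $\mathcal G=eR\setminus\{0\}$. Setting: $R$ is supertropical with $e\mathcal T=\mathcal G$, $\mathcal T\cdot\mathcal T\subseteq\mathcal T$, $\mathcal G$ cancellative under multiplication; $V$ is free with base $\varepsilon_1,\varepsilon_2$; $q$ is a quadratic form on $V$ (a map with $q(ax)=a^2q(x)$ and some symmetric bilinear companion $b$ with $q(x+y)=q(x)+q(y)+b(x,y)$); $\alpha_i=q(\varepsilon_i)$, $\beta=b(\varepsilon_1,\varepsilon_2)$, so $q(x_1\varepsilon_1+x_2\varepsilon_2)=\alpha_1x_1^2+\beta x_1x_2+\alpha_2x_2^2$. The minimal ordering on $V$: $x\le y\iff\exists z:\ x+z=y$; $x<y$ means $x\le y$, $x\neq y$. $x$ is $q$-minimal if no $x'<x$ has $q(x')=q(x)$. *)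

(* Defs.v *)
From HB Require Import structures.
From mathcomp Require Import all_boot all_order all_algebra.
Set Implicit Arguments. Unset Strict Implicit. Unset Printing Implicit Defensive.
Import Order.TTheory GRing.Theory.
Local Open Scope ring_scope.

Section Supertropical.
Variable R : comPzSemiRingType.

Definition e : R := 1 + 1.

Definition supertropical : Prop :=
  e + e = e /\
  (forall x y : R, e * x <> e * y -> x + y = x \/ x + y = y) /\
  (forall x y : R, e * x = e * y -> x + y = e * y).

Definition in_eR (x : R) : Prop := exists y, x = e * y.
Definition tang (x : R) : Prop := ~ in_eR x.
Definition ghost (x : R) : Prop := in_eR x /\ x <> 0.

(* order on eR : u <= v iff u + v = v ;  x <_nu y iff e x < e y *)
Definition nu_lt (x y : R) : Prop := e * x + e * y = e * y /\ e * x <> e * y.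

Definition setting_hyp : Prop :=
  supertropical /\
  (forall x, tang x -> ghost (e * x)) /\
  (forall g, ghost g -> exists x, tang x /\ e * x = g) /\
  (forall x y, tang x -> tang y -> tang (x * y)) /\
  (forall a b c, ghost a -> ghost b -> ghost c -> a * b = a * c -> b = c).

Definition V := (R * R)%type.
Definition vadd (x y : V) : V := (x.1 + y.1, x.2 + y.2).
Definition vscale (a : R) (x : V) : V := (a * x.1, a * x.2).
Definition eps1 : V := (1, 0).
Definition eps2 : V := (0, 1).
Definition vcomb (x1 x2 : R) : V := vadd (vscale x1 eps1) (vscale x2 eps2).

Definition is_quadratic_form (q : V -> R) (b : V -> V -> R) : Prop :=
  (forall a x, q (vscale a x) = a ^+ 2 * q x) /\
  (forall x y, b x y = b y x) /\
  (forall x y z, b (vadd x y) z = b x z + b y z) /\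
  (forall a x y, b (vscale a x) y = a * b x y) /\
  (forall x y, q (vadd x y) = q x + q y + b x y).

Definition vle (x y : V) : Prop := exists z, vadd x z = y.
Definition vlt (x y : V) : Prop := vle x y /\ x <> y.

Definition q_minimal (q : V -> R) (x : V) : Prop :=
  ~ (exists x', vlt x' x /\ q x' = q x).

End Supertropical.

(* Main.v *)
Require Import Defs.
From HB Require Import structures.
From mathcomp Require Import all_boot all_order all_algebra.
From mathcomp Require Import ring.
Set Implicit Arguments. Unset Strict Implicit.
Import GRing.Theory.
Local Open Scope ring_scope.

Section Helpers.
Variable R : comPzSemiRingType.
Hypothesis H : setting_hyp R.
Local Notation e := (e R).
Implicit Types x y z a b c : R.

Definition nle (x y : R) := e * x + e * y = e * y.

Lemma ee : e * e = e.
Proof. case: H => [[Hee _] _]. by rewrite {2}/e mulrDr mulr1. Qed.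

Lemma ex_ex x : e * x + e * x = e * x.
Proof. case: H => [[Hee _] _]. by rewrite -mulrDl Hee. Qed.

Lemma sum_eq x y : e * x = e * y -> x + y = e * y.
Proof. case: H => [[_ [_ h]] _]. exact: h. Qed.

Lemma sum_neq x y : e * x <> e * y -> x + y = x \/ x + y = y.
Proof. case: H => [[_ [h _]] _]. exact: h. Qed.

Lemma lt_add x y : nu_lt x y -> x + y = y.
Proof.
case=> h1 h2; case: (sum_neq h2) => // hx.
by exfalso; apply: h2; rewrite -h1 -mulrDr hx.
Qed.

Lemma tri x y : nu_lt x y \/ e * x = e * y \/ nu_lt y x.
Proof.
have [->|hne] := (@eqP _ (e*x) (e*y)) ; first by right; left.
have hne' : e * (e * x) <> e * (e * y) by rewrite !mulrA ee.
case: (sum_neq hne') => h.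
- right; right; rewrite /nu_lt; split; first by rewrite addrC h.
  by move=> E; apply: hne.
- by left; rewrite /nu_lt; split.
Qed.

Lemma nle_trans x y z : nle x y -> nle y z -> nle x z.
Proof. rewrite /nle => h1 h2; by rewrite -h2 addrA h1. Qed.

Lemma nle_mul c x y : nle x y -> nle (c * x) (c * y).
Proof.
rewrite /nle => h.
by rewrite mulrCA [e * (c * y)]mulrCA -mulrDr h.
Qed.

Lemma lt_nle x y : nu_lt x y -> nle x y.
Proof. by case. Qed.

Lemma nle_lt x y z : nle x y -> nu_lt y z -> nu_lt x z.
Proof.
move=> h1 [h2 h3]; split; first exact: nle_trans h2.
move=> E; apply: h3; rewrite /nle E in h1.
by rewrite -h2 addrC h1.
Qed.

Lemma lt_nle_lt x y z : nu_lt x y -> nle y z -> nu_lt x z.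
Proof.
move=> [h1 h3] h2; split; first exact: nle_trans h2.
move=> E; apply: h3; rewrite /nle -E in h2.
by rewrite -h1 addrC h2.
Qed.

Lemma add_lt x y z : nu_lt x z -> nu_lt y z -> nu_lt (x + y) z.
Proof.
move=> [h1 h1'] [h2 h2']; split.
  by rewrite mulrDr -addrA h2 h1.
rewrite mulrDr; case: (tri x y) => [[-> _]|[->|[h _]]] //.
  by rewrite ex_ex.
by rewrite addrC h.
Qed.

Lemma lt_irr x : ~ nu_lt x x.
Proof. by case. Qed.

Lemma in_eR_e y : in_eR (e * y).
Proof. by exists y. Qed.

Lemma tang_mul x y : tang x -> tang y -> tang (x * y).
Proof. case: H => [_ [_ [_ [h _]]]]; exact: h. Qed.

Lemma tang_ghost x : tang x -> ghost (e * x).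
Proof. case: H => [_ [h _]]; exact: h. Qed.

Lemma cancel_g a b c : ghost a -> ghost b -> ghost c -> a * b = a * c -> b = c.
Proof. case: H => [_ [_ [_ [_ h]]]]; exact: h. Qed.

Lemma tang_sum x y : tang (x + y) -> e * x <> e * y.
Proof. move=> ht E; apply: ht; rewrite (sum_eq E); exact: in_eR_e. Qed.

Lemma tang_nz x : tang x -> x <> 0.
Proof. move=> ht E; apply: ht; exists 0; by rewrite E mulr0. Qed.

Lemma tang_mul_l x y : tang (x * y) -> tang x.
Proof. move=> ht [z Ez]; apply: ht; exists (z * y); by rewrite Ez mulrA. Qed.

Lemma tang_mul_r x y : tang (x * y) -> tang y.
Proof. by rewrite mulrC; apply: tang_mul_l. Qed.

Lemma le_mono y z : nle y (y + z).
Proof. by rewrite /nle mulrDr addrA ex_ex. Qed.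

Lemma le_strict y z : tang (y + z) -> y <> y + z -> e * y <> e * (y + z).
Proof.
move=> ht hne E.
have hyz := tang_sum ht.
case: (sum_neq hyz) => h; first by apply: hne.
by apply: hyz; rewrite E h.
Qed.

Lemma sq_mono y x : nle y x -> nle (y ^+ 2) (x ^+ 2).
Proof.
move=> h; rewrite !expr2.
apply: (@nle_trans _ (y * x)); first exact: nle_mul.
by rewrite [y * x]mulrC; apply: nle_mul.
Qed.

Lemma core (al1 al2 be x1 x2 y1 y2 : R) :
  tang be -> tang x1 -> tang x2 -> nle y1 x1 -> nle y2 x2 -> e * y1 <> e * x1 ->
  nu_lt (al1 * x1 ^+ 2) (be * x1 * x2) -> nu_lt (al2 * x2 ^+ 2) (be * x1 * x2) ->
  nu_lt (al1 * y1 ^+ 2 + al2 * y2 ^+ 2 + be * y1 * y2) (be * x1 * x2).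
Proof.
move=> tb t1 t2 l1 l2 s1 hA hC.
apply: add_lt; first apply: add_lt.
- apply: nle_lt hA; apply: nle_mul; exact: sq_mono.
- apply: nle_lt hC; apply: nle_mul; exact: sq_mono.
apply: (@nle_lt _ (be * y1 * x2)).
  by rewrite -!mulrA; apply: nle_mul; apply: nle_mul.
split.
  have -> : be * y1 * x2 = (be * x2) * y1 by ring.
  have -> : be * x1 * x2 = (be * x2) * x1 by ring.
  exact: nle_mul.
move=> E.
have tB : tang (be * x1 * x2) by apply: tang_mul => //; apply: tang_mul.
have [hB1 hB2] := tang_ghost tB.
have [y1z|y1nz] := (@eqP _ (e * y1) 0).
  apply: hB2; rewrite -E.
  have -> : e * (be * y1 * x2) = (be * x2) * (e * y1) by ring.
  by rewrite y1z mulr0.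
have gy1 : ghost (e * y1) by split => //; exact: in_eR_e.
have gx1 := tang_ghost t1.
have gbx := tang_ghost (tang_mul tb t2).
apply: s1; apply: (cancel_g gbx gy1 gx1).
have -> : e * (be * x2) * (e * y1) = e * (be * y1 * x2).
  by rewrite mulrCA !mulrA ee; ring.
have -> : e * (be * x2) * (e * x1) = e * (be * x1 * x2).
  by rewrite mulrCA !mulrA ee; ring.
exact: E.
Qed.

End Helpers.

Lemma vcomb_pair (R : comPzSemiRingType) (y1 y2 : R) : vcomb y1 y2 = (y1, y2).
Proof. by rewrite /vcomb /vadd /vscale /eps1 /eps2 /= !mulr1 !mulr0 addr0 add0r. Qed.

Lemma qform (R : comPzSemiRingType) (q : V R -> R) (b : V R -> V R -> R) y1 y2 :
  is_quadratic_form q b ->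
  q (y1, y2) = q (eps1 R) * y1 ^+ 2 + q (eps2 R) * y2 ^+ 2 + b (eps1 R) (eps2 R) * y1 * y2.
Proof.
case=> [hs [hsym [_ [hb hq]]]].
have -> : (y1, y2) = vcomb y1 y2 by rewrite vcomb_pair.
rewrite /vcomb hq !hs hb hsym hb (hsym (eps2 R)).
rewrite (mulrC (y1 ^+ 2)) (mulrC (y2 ^+ 2)); congr (_ + _); ring.
Qed.

Lemma qform1 (R : comPzSemiRingType) (q : V R -> R) (b : V R -> V R -> R) y1 :
  is_quadratic_form q b -> q (y1, 0) = q (eps1 R) * y1 ^+ 2.
Proof.
move=> Hq; rewrite (qform _ _ Hq).
have -> : (0:R)^+2 = 0 by rewrite expr2 mul0r.
by rewrite !mulr0 !addr0.
Qed.

Lemma qform2 (R : comPzSemiRingType) (q : V R -> R) (b : V R -> V R -> R) y2 :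
  is_quadratic_form q b -> q (0, y2) = q (eps2 R) * y2 ^+ 2.
Proof.
move=> Hq; rewrite (qform _ _ Hq).
have -> : (0:R)^+2 = 0 by rewrite expr2 mul0r.
by rewrite !mulr0 !mul0r add0r addr0.
Qed.

Theorem corollary6p8 (R : comPzSemiRingType) (q : V R -> R) (b : V R -> V R -> R)
    (x1 x2 : R) :
  setting_hyp R -> is_quadratic_form q b ->
  x1 <> 0 -> x2 <> 0 ->
  let al1 := q (eps1 R) in let al2 := q (eps2 R) in
  let be := b (eps1 R) (eps2 R) in
  (q_minimal q (vcomb x1 x2) /\ tang (q (vcomb x1 x2))) <->
  (tang be /\ tang x1 /\ tang x2 /\
   nu_lt (al1 * x1 ^+ 2) (be * x1 * x2) /\ nu_lt (al2 * x2 ^+ 2) (be * x1 * x2)).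
Proof.
move=> H Hq n1 n2 al1 al2 be.
rewrite vcomb_pair (qform _ _ Hq) -/al1 -/al2 -/be.
split.
- move=> [hmin ht].
  set A := al1 * x1 ^+ 2; set C := al2 * x2 ^+ 2; set B := be * x1 * x2.
  have nA : A + C + B <> A.
    move=> E; apply: hmin; exists (x1, 0); split.
      split; last by case=> /esym.
      by exists (0, x2); rewrite /vadd /= addr0 add0r.
    by rewrite (qform1 x1 Hq) (qform _ _ Hq) E.
  have nC : A + C + B <> C.
    move=> E; apply: hmin; exists (0, x2); split.
      split; last by case=> /esym.
      by exists (x1, 0); rewrite /vadd /= addr0 add0r.
    by rewrite (qform2 x2 Hq) (qform _ _ Hq) E.
  have hne := tang_sum H ht.
  have hSB : nu_lt (A + C) B.
    case: (tri H (A + C) B) => [//|[E|hBS]]; first by case: hne.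
    have eq1 : A + C + B = A + C by rewrite addrC (lt_add H hBS).
    rewrite eq1 in ht nA nC.
    have hne2 := tang_sum H ht.
    case: (tri H A C) => [h|[E|h]].
    + by exfalso; apply: nC; apply: (lt_add H); exact: h.
    + by case: hne2.
    + by exfalso; apply: nA; rewrite addrC; apply: (lt_add H); exact: h.
  have qB : A + C + B = B := lt_add H hSB.
  rewrite qB in ht.
  have tbx1 : tang (be * x1) by apply: (tang_mul_l (y := x2)); exact: ht.
  split; first exact: tang_mul_l tbx1.
  split; first exact: tang_mul_r tbx1.
  split; first by apply: (tang_mul_r (x := be * x1)); exact: ht.
  have lA : nle A (A + C) by exact: le_mono.
  have lC : nle C (A + C) by rewrite addrC; exact: le_mono.
  by split; [exact: nle_lt lA hSB | exact: nle_lt lC hSB].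
- move=> [tb [t1 [t2 [hA hC]]]].
  have qB : al1 * x1 ^+ 2 + al2 * x2 ^+ 2 + be * x1 * x2 = be * x1 * x2.
    by apply: (lt_add H); apply: add_lt.
  rewrite qB; split; last by apply: tang_mul => //; apply: tang_mul.
  rewrite /q_minimal; move=> [[y1 y2] [[[[z1 z2] Ez] hne] Eq]].
  rewrite (qform y1 y2 Hq) (qform x1 x2 Hq) -/al1 -/al2 -/be qB in Eq.
  case: Ez => E1 E2.
  have l1 : nle y1 x1 by rewrite -E1; exact: le_mono.
  have l2 : nle y2 x2 by rewrite -E2; exact: le_mono.
  have [ey1|ny1] := (@eqP _ y1 x1).
    have ny2 : y2 <> x2 by move=> ey2; apply: hne; rewrite ey1 ey2.
    have s2 : e R * y2 <> e R * x2.
      by rewrite -E2; apply: (le_strict H); rewrite E2.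
    have := core H tb t2 t1 l2 l1 s2.
    have -> : be * x2 * x1 = be * x1 * x2 by ring.
    move=> /(_ al2 al1 hC hA).
    have -> : al2 * y2 ^+ 2 + al1 * y1 ^+ 2 + be * y2 * y1 =
              al1 * y1 ^+ 2 + al2 * y2 ^+ 2 + be * y1 * y2 by ring.
    by rewrite Eq => /lt_irr.
  have s1 : e R * y1 <> e R * x1.
    by rewrite -E1; apply: (le_strict H); rewrite E1 //; move=> h; apply: ny1; rewrite h.
  have := core H tb t1 t2 l1 l2 s1 hA hC.
  by rewrite Eq => /lt_irr.
Qed.
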